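(* Let $\mathbf g:\mathbb{R}^{d_{\mathrm{input}}}\to\mathbb{R}^M$ be an $\ell_\infty$-dist net (as defined in the context) and let $f(\mathbf x)=\arg\max_{i\in\{1,\dots,M\}} g_i(\mathbf x)$. Let $(\mathbf x,y)$ be such that $\mathbf x$ is correctly classified, i.e. $f(\mathbf x)=y$, and let $\mathrm{margin}(\mathbf x;\mathbf g)$ denote the difference between the largest and the second-largest entries of $\mathbf g(\mathbf x)$. Then for every $\mathbf x'$ with $\|\mathbf x-\mathbf x'\|_\infty<\mathrm{margin}(\mathbf x;\mathbf g)/2$ we have $f(\mathbf x')=f(\mathbf x)$. Consequently the robust radius satisfies $R(f;\mathbf x,y)\ge \mathrm{margin}(\mathbf x;\mathbf g)/2$, i.e. $\mathrm{margin}(\mathbf x;\mathbf g)/2$ is a valid certified radius at $(\mathbf x,y)$.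
   Context: An $L$-layer $\ell_\infty$-dist net takes $\mathbf x^{(0)}=\mathbf x\in\mathbb{R}^{d_{\mathrm{input}}}$ and computes, for $1\le l\le L$, $1\le k\le d_l$, $x^{(l)}_k=\|\mathbf x^{(l-1)}-\mathbf w^{(l,k)}\|_\infty+b^{(l,k)}$ with arbitrary real parameters $\mathbf w^{(l,k)}$, $b^{(l,k)}$; with $d_L=M$ its output is $\mathbf g(\mathbf x)=(-x^{(L)}_1,\dots,-x^{(L)}_M)$. For a classifier $f$ and labeled point $(\mathbf x,y)$, the robust radius is $R(f;\mathbf x,y)=\inf_{f(\mathbf x')\ne f(\mathbf x)}\|\mathbf x'-\mathbf x\|_\infty$ if $f(\mathbf x)=y$ and $0$ otherwise; a certified radius is any lower bound on $R(f;\mathbf x,y)$. *)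

(* Defs.v *)
From HB Require Import structures.
From mathcomp Require Import all_boot all_order all_algebra.
From mathcomp Require Import all_classical all_reals ereal.
Set Implicit Arguments. Unset Strict Implicit. Unset Printing Implicit Defensive.
Import Order.TTheory GRing.Theory Num.Theory.
Local Open Scope ring_scope.

Section Defs.
Variable R : realType.

Definition vec (d : nat) := 'I_d -> R.

Definition linf_dist (d : nat) (x y : vec d) : R :=
  \big[Num.max/0]_(i < d) `|x i - y i|.

Definition dist_layer (d1 d2 : nat) (W : 'I_d2 -> vec d1) (b : vec d2)
  (x : vec d1) : vec d2 := fun k => linf_dist x (W k) + b k.

Inductive distnet : nat -> nat -> Type :=
| LastLayer (d1 d2 : nat) (W : 'I_d2 -> vec d1) (b : vec d2) : distnet d1 d2
| ConsLayer (d1 d2 d3 : nat) (W : 'I_d2 -> vec d1) (b : vec d2)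
    (rest : distnet d2 d3) : distnet d1 d3.

Fixpoint net_eval (d1 d3 : nat) (N : distnet d1 d3) : vec d1 -> vec d3 :=
  match N in distnet a c return vec a -> vec c with
  | LastLayer _ _ W b => fun x => dist_layer W b x
  | ConsLayer _ _ _ W b rest => fun x => net_eval rest (dist_layer W b x)
  end.

Definition net_out (din M : nat) (N : distnet din M) (x : vec din) : vec M :=
  fun i => - net_eval N x i.

(* f is an arg max classifier for g: f x is an index of a largest entry
   of g x (any tie-breaking rule) *)
Definition is_argmax_classifier (din M : nat) (g : vec din -> vec M)
  (f : vec din -> 'I_M) : Prop :=
  forall x (j : 'I_M), g x j <= g x (f x).

Definition sorted_entries (M : nat) (v : vec M) : seq R :=
  sort (fun a b : R => b <= a) [seq v i | i <- enum 'I_M].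

(* margin = largest entry - second largest entry (counted with multiplicity) *)
Definition margin (M : nat) (v : vec M) : R :=
  nth 0 (sorted_entries v) 0 - nth 0 (sorted_entries v) 1.

Definition robust_radius (din M : nat) (f : vec din -> 'I_M) (x : vec din)
  (y : 'I_M) : \bar R :=
  if f x == y then
    ereal_inf [set (linf_dist x' x)%:E | x' in [set x' | f x' != f x]]
  else 0%E.

End Defs.

(* Main.v *)
Require Import Defs.
From HB Require Import structures.
From mathcomp Require Import all_boot all_order all_algebra.
From mathcomp Require Import all_classical all_reals ereal.
From mathcomp Require Import lra.
Import Order.TTheory GRing.Theory Num.Theory.
Local Open Scope ring_scope.

Lemma cnt_card (T : finType) (P : pred T) : count P (enum T) = #|P|.
Proof. rewrite cardE /enum_mem size_filter count_filter; apply: eq_count => z /=; by rewrite inE andbT. Qed.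

Lemma linf_ge0 (R : realType) d (x y : vec R d) : 0 <= linf_dist x y.
Proof. rewrite /linf_dist; elim/big_ind: _ => //= a b ha hb; by rewrite le_max ha. Qed.

Lemma linf_ge (R : realType) d (x y : vec R d) i : `|x i - y i| <= linf_dist x y.
Proof. exact: (le_bigmax 0 (fun i => `|x i - y i|) i). Qed.

Lemma linf_le (R : realType) d (x y : vec R d) c :
  0 <= c -> (forall i, `|x i - y i| <= c) -> linf_dist x y <= c.
Proof. by move=> h0 h; apply: bigmax_le. Qed.

Lemma linf_sym (R : realType) d (x y : vec R d) : linf_dist x y = linf_dist y x.
Proof. by apply: eq_bigr => i _; rewrite distrC. Qed.

Lemma linf_tri (R : realType) d (x y z : vec R d) :
  linf_dist x z <= linf_dist x y + linf_dist y z.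
Proof.
apply: linf_le; first by rewrite addr_ge0 // linf_ge0.
move=> i; apply: le_trans (ler_distD (y i) (x i) (z i)) _.
by rewrite lerD // linf_ge.
Qed.

Lemma layer_lip (R : realType) d1 d2 (W : 'I_d2 -> vec R d1) b x x' :
  linf_dist (dist_layer W b x) (dist_layer W b x') <= linf_dist x x'.
Proof.
apply: linf_le; first exact: linf_ge0.
move=> k; rewrite /dist_layer opprD addrACA subrr addr0 ler_norml; apply/andP; split.
- have := @linf_tri _ _ x' x (W k); rewrite (@linf_sym _ _ x' x); lra.
- have := @linf_tri _ _ x x' (W k); lra.
Qed.

Lemma net_lip (R : realType) d1 d3 (N : distnet R d1 d3) x x' :
  linf_dist (net_eval N x) (net_eval N x') <= linf_dist x x'.
Proof.
elim: N x x' => [a c W b|a c e W b rest IH] x x' /=; first exact: layer_lip.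
apply: le_trans (IH _ _) _; exact: layer_lip.
Qed.

Lemma margin_gap (R : realType) M (hM : (2 <= M)%N) (v : vec R M) (k : 'I_M) :
  (forall j, v j <= v k) -> forall j, j != k -> v j <= v k - margin v.
Proof.
move=> hk j hjk.
set le := fun a b : R => b <= a.
have tr : transitive le by move=> a b c /= h1 h2; rewrite /le (le_trans h2 h1).
have tot : total le by move=> a b; rewrite /le le_total.
have hs : sorted le (sorted_entries v) by exact: sort_sorted.
have hp : perm_eq (sorted_entries v) [seq v i | i <- enum 'I_M].
  by rewrite /sorted_entries perm_sort.
have hsz : size (sorted_entries v) = M.
  by rewrite (perm_size hp) size_map size_enum_ord.
rewrite /margin.
move: hs hp hsz; case: (sorted_entries v) => [|a [|b rest]] //=; first by move=> _ _ h; rewrite -h in hM.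
  by move=> _ _ h; rewrite -h in hM.
move=> /andP [hab hrest] hp _.
have hrb : all (fun z => z <= b) rest by exact: (order_path_min tr hrest).
have hak : a = v k.
  apply/eqP; rewrite eq_le; apply/andP; split.
    have : a \in [seq v i | i <- enum 'I_M] by rewrite -(perm_mem hp) mem_head.
    by case/mapP => i _ ->.
  have : v k \in a :: b :: rest by rewrite (perm_mem hp); apply: map_f; rewrite mem_enum.
  rewrite !inE => /or3P [/eqP -> //| /eqP -> //| hin].
  by apply: le_trans (allP hrb _ hin) _.
rewrite -hak opprD opprK addrA subrr add0r.
rewrite leNgt; apply/negP => hbj.
have c1 : (count (fun z : R => (b < z)%R) (a :: b :: rest) <= 1)%N.
  have h0 : count (fun z : R => (b < z)%R) rest = 0%N.
    apply/eqP; rewrite -leqn0 leqNgt -has_count; apply/hasPn => z hz.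
    by rewrite -leNgt (allP hrb _ hz).
  by rewrite /= ltxx add0n h0 addn0; case: (b < a).
have c2 : (2 <= count (fun z : R => (b < z)%R) [seq v i | i <- enum 'I_M])%N.
  rewrite count_map cnt_card.
  have -> : 2%N = #|[set j; k]| by rewrite cards2 hjk.
  apply: subset_leq_card; apply/fintype.subsetP => i; rewrite !inE => /orP [/eqP -> //| /eqP ->].
  by rewrite /= (lt_le_trans hbj (hk j)).
by move: c1; rewrite (permP hp) => c1; have := leq_trans c2 c1.
Qed.

Theorem fact2 (R : realType) (din M : nat) (hM : (2 <= M)%N)
  (N : distnet R din M) (f : vec R din -> 'I_M)
  (hf : is_argmax_classifier (net_out N) f)
  (x : vec R din) (y : 'I_M) (hy : f x = y) :
  (forall x' : vec R din,
      linf_dist x x' < margin (net_out N x) / 2 -> f x' = f x) /\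
  ((margin (net_out N x) / 2)%:E <= robust_radius f x y)%E.
Proof.
have P1 : forall x' : vec R din,
    linf_dist x x' < margin (net_out N x) / 2 -> f x' = f x.
  move=> x' hd; apply/eqP; apply/negPn/negP => hne.
  have hg := @margin_gap _ _ hM _ _ (hf x) _ hne.
  have hl := @net_lip _ _ _ N x x'.
  have h1 := le_trans (@linf_ge _ _ (net_eval N x) (net_eval N x') (f x')) hl.
  have h2 := le_trans (@linf_ge _ _ (net_eval N x) (net_eval N x') (f x)) hl.
  have h3 := hf x' (f x).
  move: hd hg h3 h1 h2; rewrite /net_out.
  set m := margin _; set d := linf_dist x x'.
  set a := net_eval N x (f x'); set b := net_eval N x' (f x');
  set c := net_eval N x (f x); set e := net_eval N x' (f x).
  move=> hd hg h3 h1 h2.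
  have := ler_norml (a - b) d; rewrite h1 => /esym /andP [h1a h1b].
  have := ler_norml (c - e) d; rewrite h2 => /esym /andP [h2a h2b].
  clear -hd hg h3 h1a h1b h2a h2b; lra.
split => //.
rewrite /robust_radius hy eqxx.
apply: le_ereal_inf_tmp => _ [x' hx' <-].
rewrite lee_fin leNgt; apply/negP => hlt.
move: hx'; rewrite /= P1 ?eqxx //; first by rewrite hy eqxx.
by rewrite linf_sym.
Qed.
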